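(* Let $\{(G_n,r_n),g_n^{n+1}\}$ be an inverse sequence of cellular graphs with inverse limit $G_\infty$. Consider the statements: (1) for each $i\in\mathbb{N}$, the relation $r_i$ is an equivalence relation on $G_i$; (2) for each thread $\bar x=(x_n)\in G_\infty$ and each $i\in\mathbb{N}$ there exists $j\ge i$ such that $g_i^j\big(B(x_j,2r_j)\big)\subset B(x_i,r_i)$; (3) $\{(G_n,r_n),g_n^{n+1}\}$ is a g-cell structure. Then (1) implies (2), and (2) implies (3).
   Context: A cellular graph is a pair $(G,r)$ where $G$ is a nonempty topological space and $r\subset G\times G$ is a reflexive and symmetric relation. For $u\in G$, $B(u,r)=\{v\in G:(u,v)\in r\}$, and for $A\subset G$, $B(A,r)=\bigcup_{a\in A}B(a,r)$. The relation $2r$ is $\{(x,z):\exists y\in G,\ (x,y)\in r,\ (y,z)\in r\}$. An inverse sequence of cellular graphs $\{(G_n,r_n),g_n^{n+1}\}$ consists of cellular graphs $(G_n,r_n)$, $n\in\mathbb{N}=\{1,2,\dots\}$, and continuous maps $g_n^{n+1}:G_{n+1}\to G_n$ such that $(g_n^{n+1}(x),g_n^{n+1}(y))\in r_n$ whenever $(x,y)\in r_{n+1}$; one sets $g_n^n=\mathrm{id}$ and $g_n^l=g_n^{n+1}\circ\cdots\circ g_{l-1}^{l}$ for $n<l$. Its inverse limit is $G_\infty=\{\bar x=(x_n)\in\prod_n G_n: g_i^j(x_j)=x_i \text{ for all } j\ge i\}$ with the subspace topology of the product topology; its elements are called threads, and $g_i:G_\infty\to G_i$ denotes the restriction of the $i$-th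 projection. The natural relation on $G_\infty$ is $r=\{(\bar x,\bar y)\in G_\infty\times G_\infty:(x_n,y_n)\in r_n \text{ for all } n\}$. The inverse sequence is a generalized cell structure (g-cell structure) if its natural relation $r$ is an equivalence relation on $G_\infty$. *)

(* Defs.v *)
From HB Require Import structures.
From mathcomp Require Import all_boot.
From mathcomp Require Import boolp classical_sets topology.

Unset Printing Implicit Defensive.

(* Indices: we index by nat starting at 0 instead of 1 (pure relabeling). *)

Definition cellular_graph (X : topologicalType) (r : X -> X -> Prop) : Prop :=
  (exists x : X, True) /\ (forall x, r x x) /\ (forall x y, r x y -> r y x).

Definition ball_rel (X : Type) (r : X -> X -> Prop) (u : X) : set X :=
  [set v | r u v].

Definition double_rel (X : Type) (r : X -> X -> Prop) : X -> X -> Prop :=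
  fun x z => exists y, r x y /\ r y z.

Definition inverse_seq_cg (G : nat -> topologicalType)
  (r : forall n, G n -> G n -> Prop) (g : forall n, G n.+1 -> G n) : Prop :=
  (forall n, cellular_graph (G n) (r n)) /\
  (forall n, continuous (g n)) /\
  (forall n (x y : G n.+1), r n.+1 x y -> r n (g n x) (g n y)).

(* g_i^{k+i} : G_{k+i} -> G_i (with g_i^i = id); "j >= i" is written j = k + i. *)
Fixpoint gcomp (G : nat -> topologicalType) (g : forall n, G n.+1 -> G n)
  (k i : nat) : G (k + i) -> G i :=
  match k return G (k + i) -> G i with
  | 0 => fun x => x
  | k'.+1 => fun x => gcomp G g k' i (g (k' + i) x)
  end.

Definition is_thread (G : nat -> topologicalType) (g : forall n, G n.+1 -> G n)
  (x : forall n, G n) : Prop :=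
  forall i k, gcomp G g k i (x (k + i)) = x i.

Definition inv_limit (G : nat -> topologicalType) (g : forall n, G n.+1 -> G n) :=
  {x : forall n, G n | is_thread G g x}.

Definition natural_rel (G : nat -> topologicalType)
  (r : forall n, G n -> G n -> Prop) (g : forall n, G n.+1 -> G n)
  (x y : inv_limit G g) : Prop :=
  forall n, r n (proj1_sig x n) (proj1_sig y n).

Definition is_equivalence_rel (X : Type) (R : X -> X -> Prop) : Prop :=
  (forall x, R x x) /\ (forall x y, R x y -> R y x) /\
  (forall x y z, R x y -> R y z -> R x z).

Definition g_cell_structure (G : nat -> topologicalType)
  (r : forall n, G n -> G n -> Prop) (g : forall n, G n.+1 -> G n) : Prop :=
  is_equivalence_rel (inv_limit G g) (natural_rel G r g).

(* Main.v *)
Require Import Defs.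
From mathcomp Require Import all_boot.
From mathcomp Require Import boolp classical_sets topology.
Local Open Scope classical_set_scope.

Theorem mainTheorem1 (G : nat -> topologicalType)
  (r : forall n, G n -> G n -> Prop) (g : forall n, G n.+1 -> G n) :
  inverse_seq_cg G r g ->
  let S1 := forall i, is_equivalence_rel (G i) (r i) in
  let S2 := forall x : inv_limit G g, forall i, exists k,
      gcomp G g k i @` ball_rel (G (k + i)) (double_rel (G (k + i)) (r (k + i))) (proj1_sig x (k + i))
        `<=` ball_rel (G i) (r i) (proj1_sig x i) in
  let S3 := g_cell_structure G r g in
  (S1 -> S2) /\ (S2 -> S3).
Proof.
move=> [Hcg _] S1 S2 S3; split.
- move=> H1 x i; exists 0 => _ [v [y [Hxy Hyz]] <-] /=.
  have [_ [_ Ht]] := H1 i.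
  exact: (Ht _ _ _ Hxy Hyz).
- move=> H2; split; [|split].
  + move=> x n; have [_ [Hr _]] := Hcg n; exact: Hr.
  + move=> x y Hxy n; have [_ [_ Hs]] := Hcg n; exact: Hs.
  + move=> x y z Hxy Hyz i.
    have [k Hk] := H2 x i.
    have Hz := proj2_sig z i k.
    rewrite -Hz; apply: Hk; exists (proj1_sig z (k + i)) => //.
    exists (proj1_sig y (k + i)); split; [exact: Hxy|exact: Hyz].
Qed.
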